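(* Let $D$ be an integral domain with fraction field $K$, and let $R(D)$ be the subring of $K$ generated by $\{1/d \mid d \in D\setminus\{0\}\}$. Then $D$ is Bonaccian if and only if $R(D)$ is a valuation ring (of $K$). Moreover, the following are equivalent: (i) $D$ is Egyptian; (ii) $R(D) = K$; (iii) $D \subseteq R(D)$.
   Context: An element $\alpha\in K$ is called $D$-Egyptian if it is a sum of reciprocals of distinct nonzero elements of $D$. $D$ is Bonaccian if for every nonzero $\alpha \in K$, either $\alpha$ or $\alpha^{-1}$ is $D$-Egyptian. $D$ is Egyptian if every nonzero element of $K$ is $D$-Egyptian. *)

(* Defs.v *)
From HB Require Import structures.
From mathcomp Require Import all_boot all_order all_algebra.
Set Implicit Arguments. Unset Strict Implicit. Unset Printing Implicit Defensive.
Import GRing.Theory.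
Local Open Scope ring_scope.

Definition D_Egyptian (D : idomainType) (alpha : {fraction D}) : Prop :=
  exists s : seq D, [/\ uniq s, all (fun d => d != 0) s &
    alpha = \sum_(d <- s) (tofrac d)^-1].

Definition Bonaccian (D : idomainType) : Prop :=
  forall alpha : {fraction D}, alpha != 0 ->
    D_Egyptian alpha \/ D_Egyptian alpha^-1.

Definition Egyptian (D : idomainType) : Prop :=
  forall alpha : {fraction D}, alpha != 0 -> D_Egyptian alpha.

Definition in_RD (D : idomainType) (x : {fraction D}) : Prop :=
  forall S : {pred {fraction D}}, subring_closed S ->
    (forall d : D, d != 0 -> (tofrac d)^-1 \in S) -> x \in S.

Definition valuation_ring_of (K : fieldType) (V : K -> Prop) : Prop :=
  [/\ V 1, (forall x y, V x -> V y -> V (x - y)),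
      (forall x y, V x -> V y -> V (x * y)) &
      forall x : K, x != 0 -> V x \/ V x^-1].

(* Main.v *)
Require Import Defs.
From HB Require Import structures.
From mathcomp Require Import all_boot all_order all_algebra.
From mathcomp Require Import ring lra zify.
From Stdlib Require Import Classical ClassicalEpsilon.
Set Implicit Arguments. Unset Strict Implicit. Unset Printing Implicit Defensive.
Import Order.TTheory GRing.Theory Num.Theory.
Local Open Scope ring_scope.

Lemma half_harm (m : nat) : (0 < m)%N ->
  (1 / 2 : rat) <= \sum_(m <= k < m.*2) (k%:R)^-1.
Proof.
move=> hm.
apply: (@le_trans _ _ (\sum_(m <= k < m.*2) ((m.*2)%:R : rat)^-1)).
  rewrite sumr_const_nat.
  have -> : (m.*2 - m = m)%N by lia.
  have hm0 : (m%:R : rat) != 0 by rewrite pnatr_eq0; lia.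
  rewrite -mulr_natr -muln2 natrM. rewrite le_eqVlt; apply/orP; left; apply/eqP. field. by rewrite hm0.
apply: ler_sum_nat => k /andP [h1 h2].
rewrite lef_pV2 ?posrE ?ltr0n ?ler_nat; lia.
Qed.

Lemma harm_big (L : nat) : (0 < L)%N -> (1 : rat) < \sum_(L <= k < 8 * L) (k%:R)^-1.
Proof.
move=> hL.
rewrite (@big_cat_nat _ _ _ L.*2) /=; [|lia|lia].
rewrite (@big_cat_nat _ _ _ (L.*2).*2 L.*2 (8 * L)) /=; [|lia|lia].
have -> : (8 * L = ((L.*2).*2).*2)%N by lia.
have h1 := half_harm hL.
have h2 := @half_harm L.*2 ltac:(lia).
have h3 := @half_harm (L.*2).*2 ltac:(lia).
lra.
Qed.
Lemma greedy (A : nat) : forall a b L : nat, (a <= A)%N -> (0 < L)%N -> (a * L < b)%N ->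
  exists t : seq nat, [/\ uniq t, all (fun n => L < n)%N t &
    (a%:R / b%:R : rat) = \sum_(n <- t) (n%:R)^-1].
Proof.
elim: A => [|A IH] a b L haA hL hab.
  have -> : a = 0%N by lia.
  by exists [::]; rewrite big_nil mul0r.
case: (posnP a) => [->|ha]; first by exists [::]; rewrite big_nil mul0r.
have hdiv := divn_eq (b + a.-1) a.
have hmod := ltn_pmod (b + a.-1) ha.
move: hdiv hmod.
set n := ((b + a.-1) %/ a)%N.
set r := ((b + a.-1) %% a)%N.
have -> : a.-1 = (a - 1)%N by lia.
move=> hdiv hmod.
have h1 : (b <= a * n)%N by nia.
have h2 : (a * n < b + a)%N by nia.
have hLn : (L < n)%N by rewrite -(ltn_pmul2l ha); apply: leq_trans h1.
have e1 : (a * n - b <= A)%N by nia.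
have e2 : (0 < n)%N by lia.
have e3 : ((a * n - b) * n < b * n)%N by nia.
have [t [ut at_ st]] := IH (a * n - b)%N (b * n)%N n e1 e2 e3.
exists (n :: t); split => /=.
- rewrite ut andbT; apply/negP => /(allP at_); by rewrite ltnn.
- rewrite hLn /=; apply/allP => m /(allP at_) /=; lia.
rewrite big_cons -st natrB // natrM.
have hb : (b%:R : rat) != 0 by rewrite pnatr_eq0; lia.
have hn : (n%:R : rat) != 0 by rewrite pnatr_eq0; lia.
rewrite natrM. field. by rewrite hb hn.
Qed.

Lemma egypt1 (M : nat) : exists t : seq nat,
  [/\ uniq t, all (fun n => M < n)%N t & \sum_(n <- t) ((n%:R : rat)^-1) = 1].
Proof.
pose L0 := M.+1.
pose h N := \sum_(L0 <= k < N) ((k%:R : rat)^-1).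
have exP : exists N, (1 < h N). 
  by exists (8 * L0)%N; apply: harm_big.
case: (ex_minnP exP) => N1 hN1 hmin.
have hN1gt : (L0 < N1)%N.
  rewrite ltnNge; apply/negP => hle.
  by move: hN1; rewrite /h big_geq // ltr10.
have [N eN] : exists N, N1 = N.+1 by exists N1.-1; lia.
subst N1.
have hLN : (L0 <= N)%N by lia.
have hNle : h N <= 1.
  rewrite leNgt; apply/negP => hc.
  have := hmin N hc; lia.
have hrec : h N.+1 = h N + (N%:R)^-1 by rewrite /h big_nat_recr.
pose r := 1 - h N.
have r0 : 0 <= r by rewrite /r subr_ge0.
have rlt : r < (N%:R)^-1 by rewrite /r; move: hN1; rewrite hrec; lra.
pose a := `|numq r|%N.
pose b := `|denq r|%N.
have hq : numq r = Posz a by rewrite /a gez0_abs // numq_ge0.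
have hd : denq r = Posz b by rewrite /b gez0_abs // ltW // denq_gt0.
have rab : r = a%:R / b%:R by rewrite -[LHS]divq_num_den hq hd.
have hb : (0 < b)%N by have := denq_gt0 r; rewrite hd; lia.
have hN0 : (0 < N)%N by lia.
have haN : (a * N < b)%N.
  move: rlt; rewrite rab ltr_pdivrMr ?ltr0n // mulrC ltr_pdivlMr ?ltr0n //.
  by rewrite -natrM ltr_nat.
have [tg [ug ag sg]] := @greedy a a b N (leqnn a) hN0 haN.
exists (iota L0 (N - L0) ++ tg); split.
- rewrite cat_uniq iota_uniq ug andbT /=.
  apply/hasPn => x /(allP ag) /= hx; rewrite mem_iota; lia.
- rewrite all_cat; apply/andP; split.
    by apply/allP => x; rewrite mem_iota /L0; lia.
  by apply/allP => x /(allP ag) /=; rewrite /L0 in hLN; lia.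
rewrite big_cat /= -sg -rab /r.
have -> : \sum_(i <- iota L0 (N - L0)) (i%:R : rat)^-1 = h N by [].
lra.
Qed.
Section Transfer.
Variable F : fieldType.
Hypothesis c0 : forall n : nat, (0 < n)%N -> n%:R != 0 :> F.

Lemma intr_neq0_c0 (z : int) : z != 0 -> z%:~R != 0 :> F.
Proof.
case: z => [n|n] hz.
  by apply: c0; rewrite lt0n; apply: contra hz => /eqP ->.
by rewrite NegzE mulrNz oppr_eq0; apply: c0.
Qed.

Let nz_den (x : rat) : (denq x)%:~R != 0 :> F.
Proof. by apply: intr_neq0_c0; rewrite denq_eq0. Qed.

Lemma ratrB0 (x y : rat) : ratr (x - y) = ratr x - ratr y :> F.
Proof.
have injZtoQ: @injective rat int intr by apply: intr_inj.
apply: (canLR (mulfK (nz_den _))); apply: (mulIf (nz_den x)).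
rewrite mulrAC mulrBl divfK ?nz_den // mulrAC -!rmorphM.
apply: (mulIf (nz_den y)); rewrite mulrAC mulrBl divfK ?nz_den //.
rewrite -!(rmorphM, rmorphB); congr _%:~R; apply: injZtoQ.
rewrite !(rmorphM, rmorphB) /= [_ - _]lock /= -lock !numqE.
by rewrite (mulrAC y) -!mulrBl -mulrA mulrAC !mulrA.
Qed.

Lemma ratrM0 (x y : rat) : ratr (x * y) = ratr x * ratr y :> F.
Proof.
have injZtoQ: @injective rat int intr by apply: intr_inj.
rewrite /ratr mulrC mulrAC; apply: canLR (mulKf (nz_den _)) _; rewrite !mulrA.
do 2!apply: canRL (mulfK (nz_den _)) _; rewrite -!rmorphM; congr _%:~R.
apply: injZtoQ; rewrite !rmorphM [x * y]lock /= !numqE -lock.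
by rewrite -!mulrA mulrA mulrCA -!mulrA (mulrCA y).
Qed.

Lemma ratr0' : ratr (0 : rat) = 0 :> F.
Proof. by rewrite /ratr /= mul0r. Qed.

Lemma ratr1' : ratr (1 : rat) = 1 :> F.
Proof. by rewrite /ratr /= invr1 mulr1. Qed.

Lemma ratrD0 (x y : rat) : ratr (x + y) = ratr x + ratr y :> F.
Proof.
have hN : ratr (- y) = - ratr y :> F by rewrite -sub0r ratrB0 ratr0' sub0r.
by rewrite -{1}[y]opprK ratrB0 hN opprK.
Qed.

Lemma transfer_egypt (t : seq nat) : all (fun n => 0 < n)%N t ->
  \sum_(n <- t) ((n%:R : rat)^-1) = 1 -> \sum_(n <- t) ((n%:R : F)^-1) = 1.
Proof.
move=> ht hs.
have -> : \sum_(n <- t) ((n%:R : F)^-1) = ratr (\sum_(n <- t) ((n%:R : rat)^-1)).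
  elim: t ht {hs} => [|n t IH] /=; first by rewrite !big_nil ratr0'.
  case/andP => hn ht; rewrite !big_cons ratrD0 IH //; congr (_ + _).
  have hnF : (n%:R : F) != 0 by apply: c0.
  have hnQ : (n%:R : rat) != 0 by rewrite pnatr_eq0 -lt0n.
  have e : (n%:R : F) * ratr ((n%:R : rat)^-1) = 1.
    by rewrite -(ratr_nat F n) -ratrM0 divff // ratr1'.
  by rewrite -[RHS](mulKf hnF) e mulr1.
by rewrite hs ratr1'.
Qed.

End Transfer.
Definition asb (P : Prop) : bool := if excluded_middle_informative P then true else false.
Lemma asbP (P : Prop) : reflect P (asb P).
Proof. by rewrite /asb; case: excluded_middle_informative => h; constructor. Qed.

Section Dom.
Variable D : idomainType.
Local Notation F := {fraction D}.
Local Notation tf := (@tofrac D).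

Definition MS (x : F) := exists s : seq D, all (fun d => d != 0) s /\ x = \sum_(d <- s) (tf d)^-1.

Lemma RD_MS (x : F) : in_RD x -> MS x.
Proof.
move=> H; suff : x \in [pred y | asb (MS y)] by rewrite inE => /asbP.
apply: H.
- split.
  + rewrite inE; apply/asbP; exists [:: 1]; split; first by rewrite /= oner_eq0.
    by rewrite big_seq1 tofrac1 invr1.
  + move=> u v; rewrite !inE => /asbP [su [hu ->]] /asbP [sv [hv ->]].
    apply/asbP; exists (su ++ map -%R sv); split.
      by rewrite all_cat hu all_map; apply/allP => z hz /=; rewrite oppr_eq0 (allP hv).
    rewrite big_cat big_map /= -sumrN; congr (_ + _); apply: eq_bigr => z _.
    by rewrite tofracN invrN.
  + move=> u v; rewrite !inE => /asbP [su [hu ->]] /asbP [sv [hv ->]].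
    apply/asbP; exists [seq a * b | a <- su, b <- sv]; split.
      apply/allP => z; move/allpairsP => [[a b] [ha hb ->]].
      by apply: mulf_neq0; [exact: (allP hu) | exact: (allP hv)].
    rewrite big_allpairs_dep mulr_suml; apply: eq_bigr => a _.
    rewrite mulr_sumr; apply: eq_bigr => b _.
    by rewrite tofracM invfM.
- move=> d hd; rewrite inE; apply/asbP; exists [:: d]; split; first by rewrite /= hd.
  by rewrite big_seq1.
Qed.

Lemma ES_RD (x : F) : D_Egyptian x -> in_RD x.
Proof.
move=> [s [_ hs ->]] S [S1 Ssub Smul] Sinv.
have S0 : 0 \in S by rewrite -(subrr 1); apply: (Ssub).
elim: s hs => [|d s IH] /=; first by rewrite big_nil.
case/andP => hd hs; rewrite big_cons.
have -> : (tf d)^-1 + \sum_(j <- s) (tf j)^-1 = (tf d)^-1 - (0 - \sum_(j <- s) (tf j)^-1)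
  by rewrite sub0r opprK.
apply: (Ssub); first exact: (Sinv).
by apply: (Ssub) => //; apply: IH.
Qed.


Hypothesis c0 : forall n : nat, (0 < n)%N -> n%:R != 0 :> D.

Lemma natr_inj_c0 (n m : nat) : n%:R = m%:R :> D -> n = m.
Proof.
wlog le : n m / (n <= m)%N.
  move=> W e; case: (leqP n m) => h; first exact: W.
  by apply/esym/W; [exact: ltnW|].
move=> e; have [k hk] : exists k, m = (n + k)%N by exists (m - n)%N; lia.
subst m; move: e; rewrite natrD -{1}[n%:R]addr0 => /addrI /esym /eqP.
clear le; case: k => [|k]; first by rewrite addn0.
by move=> h; move: (c0 (ltn0Sn k)); rewrite h.
Qed.

Lemma bound_c0 (s : seq D) (d : D) : d != 0 ->
  exists M : nat, forall n, (M < n)%N -> n%:R * d \notin s.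
Proof.
move=> hd; elim: s => [|e s [M1 HM1]]; first by exists 0%N.
case: (classic (exists n : nat, n%:R * d = e)) => [[n0 hn0]|hno].
  exists (maxn M1 n0) => n hn; rewrite in_cons negb_or HM1 ?andbT; last by lia.
  apply/eqP => h; rewrite -hn0 in h; move/(mulIf hd)/natr_inj_c0: h; lia.
exists M1 => n hn; rewrite in_cons negb_or HM1 // andbT.
by apply/eqP => h; apply: hno; exists n.
Qed.

Lemma addE0 (s : seq D) (d : D) : uniq s -> all (fun e => e != 0) s -> d != 0 ->
  D_Egyptian (\sum_(e <- s) (tf e)^-1 + (tf d)^-1).
Proof.
move=> us as_ hd.
have [M HM] := bound_c0 s hd.
have [t [ut at_ st]] := egypt1 M.
have c0F : forall n : nat, (0 < n)%N -> n%:R != 0 :> F.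
  by move=> n hn; rewrite -(rmorph_nat tf) tofrac_eq0; apply: c0.
have at0 : all (fun n => 0 < n)%N t by apply/allP => n /(allP at_) /=; lia.
have stF := transfer_egypt c0F at0 st.
exists (s ++ [seq n%:R * d | n <- t]); split.
- rewrite cat_uniq us /=; apply/andP; split.
    apply/hasPn => z /mapP [n hn ->]; apply: HM; exact: (allP at_).
  rewrite map_inj_uniq // => n m /(mulIf hd); exact: natr_inj_c0.
- rewrite all_cat as_ /=; apply/allP => z /mapP [n hn ->].
  by rewrite mulf_neq0 // c0 //; apply: (allP at0).
rewrite big_cat big_map /=; congr (_ + _).
rewrite -[LHS]mul1r -stF mulr_suml; apply: eq_bigr => n _.
by rewrite tofracM invfM rmorph_nat.
Qed.
End Dom.

Section Dom2.
Variable D : idomainType.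
Local Notation F := {fraction D}.
Local Notation tf := (@tofrac D).

Lemma two_cases : (exists n : nat, (0 < n)%N /\ n%:R = 0 :> D) ->
  (2%:R = 0 :> D) \/ exists h : D, 2%:R * h = 1.
Proof.
case=> n [hn hn0]; have [p hp] := natf0_pchar hn (introT eqP hn0).
have pr := pcharf_prime hp.
case: (even_prime pr) => [e2|op].
  by left; rewrite -e2 (pcharf0 hp).
right; exists ((p.+1)./2)%:R; rewrite -natrM.
have e : (2 * p.+1./2 = p.+1)%N by rewrite mul2n halfK /= op subn0.
by rewrite e -addn1 natrD (pcharf0 hp) add0r.
Qed.

Lemma addE_new (s : seq D) (d : D) : uniq s -> all (fun e => e != 0) s -> d != 0 ->
  d \notin s -> D_Egyptian (\sum_(e <- s) (tf e)^-1 + (tf d)^-1).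
Proof.
move=> us as_ hd hds; exists (d :: s); split => /=.
- by rewrite hds us.
- by rewrite hd as_.
by rewrite big_cons addrC.
Qed.

Lemma addEp (two : (2%:R = 0 :> D) \/ exists h : D, 2%:R * h = 1) (k : nat) :
  forall (s : seq D) (d : D), (size s <= k)%N -> uniq s -> all (fun e => e != 0) s ->
  d != 0 -> D_Egyptian (\sum_(e <- s) (tf e)^-1 + (tf d)^-1).
Proof.
elim: k => [|k IH] s d hs us as_ hd; case: (boolP (d \in s)) => hds;
  try by apply: addE_new.
  by move: hds; case: s hs {us as_}.
have hp := perm_to_rem hds.
rewrite (perm_big _ hp) big_cons.
set r := rem d s.
have ur : uniq r := rem_uniq d us.
have ar : all (fun e => e != 0) r by apply/allP => z /mem_rem /(allP as_).
have sr : (size r <= k)%N by rewrite /r size_rem //; move: hs; case: (size s) => //= n; lia.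
have -> : (tf d)^-1 + \sum_(e <- r) (tf e)^-1 + (tf d)^-1
   = \sum_(e <- r) (tf e)^-1 + (tf d)^-1 * (tf 2%:R) by rewrite rmorph_nat; ring.
case: two => [h2 | [h h2]].
  exists r; split => //; by rewrite h2 tofrac0 mulr0 addr0.
have hh : h != 0 by apply: contra_eq_neq h2 => ->; rewrite mulr0 eq_sym oner_eq0.
have hhF : tf h != 0 by rewrite tofrac_eq0.
have H : tf h * tf 2%:R = 1 by rewrite -tofracM mulrC h2 tofrac1.
have -> : tf 2%:R = (tf h)^-1 by rewrite -[LHS]mul1r -(mulVf hhF) -mulrA H mulr1.
rewrite -invfM -tofracM.
apply: IH => //; exact: mulf_neq0.
Qed.

Lemma addE (s : seq D) (d : D) : uniq s -> all (fun e => e != 0) s -> d != 0 ->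
  D_Egyptian (\sum_(e <- s) (tf e)^-1 + (tf d)^-1).
Proof.
case: (classic (forall n : nat, (0 < n)%N -> n%:R != 0 :> D)) => [c0|nc0].
  exact: addE0.
have two : (2%:R = 0 :> D) \/ exists h : D, 2%:R * h = 1.
  apply: two_cases; apply: NNPP => hn; apply: nc0 => n hn0; apply/eqP => e.
  by apply: hn; exists n.
exact: (addEp two (leqnn (size s))).
Qed.

Lemma MS_ES (x : F) : MS x -> D_Egyptian x.
Proof.
case=> s [hs ->]; elim: s hs => [|d s IH] /=.
  by move=> _; exists [::]; split.
case/andP => hd hs; have [s' [us' as' e']] := IH hs.
by rewrite big_cons addrC e'; apply: addE.
Qed.

Lemma RD_ES (x : F) : in_RD x -> D_Egyptian x.
Proof. by move=> h; apply: MS_ES; apply: RD_MS. Qed.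

End Dom2.

Section FR.
Local Open Scope quotient_scope.
Lemma frac_repr (D : idomainType) (x : {fraction D}) :
  exists a b : D, b != 0 /\ x * (tofrac b) = tofrac a.
Proof.
elim/quotW: x => r.
exists (r.1), (r.2); split; first exact: denom_ratioP.
rewrite /tofrac. rewrite ?piE. unlock.
transitivity (\pi_({fraction D}) (mulf r (Ratio r.2 1))).
  exact: (esym (pi_mul r (Ratio r.2 1))).
apply/eqmodP. rewrite /= equivfE /mulf /= !numden_Ratio ?mulf_neq0 ?oner_eq0 ?denom_ratioP //.
by rewrite !mulr1 mulrC.
Qed.
End FR.

Unset Implicit Arguments.

Theorem proposition2p4 (D : idomainType) :
  (Bonaccian D <-> valuation_ring_of (@in_RD D)) /\
  (Egyptian D <-> (forall x : {fraction D}, in_RD x)) /\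
  ((forall x : {fraction D}, in_RD x) <-> (forall d : D, in_RD (tofrac d))).
Proof.
have RD0 : in_RD (0 : {fraction D}).
  move=> S [S1 Ssub _] _; by rewrite -(subrr 1); apply: Ssub.
split; [split|split; split].
- move=> B; split.
  + by move=> S [S1 _ _] _.
  + move=> x y hx hy S hS Sinv; have [_ Ssub _] := hS.
    by apply: Ssub; [apply: hx | apply: hy].
  + move=> x y hx hy S hS Sinv; have [_ _ Smul] := hS.
    by apply: Smul; [apply: hx | apply: hy].
  + move=> x hx; case: (B x hx) => h; [left|right]; exact: ES_RD.
- case=> _ _ _ Vv x hx; case: (Vv x hx) => h; [left|right]; exact: RD_ES.
- move=> Eg x; have [->|hx] := eqVneq x 0; first exact: RD0.
  exact: ES_RD (Eg x hx).
- by move=> H x _; apply: RD_ES.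
- by move=> H d; apply: H.
- move=> H x; have [a [b [hb e]]] := frac_repr x.
  have -> : x = tofrac a * (tofrac b)^-1.
    by rewrite -e mulfK // tofrac_eq0.
  move=> S hS Sinv; have [_ _ Smul] := hS.
  by apply: Smul; [apply: H | apply: Sinv].
Qed.
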